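(* Let $\Omega\subset\mathbb{R}^N$ be a bounded strictly convex domain having an interior tangent ball at every point of $\partial\Omega$. Let $\mu_1>0$ and $\psi_1\in C(\overline\Omega)$ with $\psi_1>0$ in $\Omega$, $\psi_1=0$ on $\partial\Omega$, $-\lambda_N(D^2\psi_1)=\mu_1\psi_1$ in $\Omega$ (viscosity sense), and let $\varphi_1\in C(\overline\Omega)$ with $\varphi_1<0$ in $\Omega$, $\varphi_1=0$ on $\partial\Omega$, $-\lambda_1(D^2\varphi_1)=\mu_1\varphi_1$ in $\Omega$; assume $\|\psi_1\|_\infty=\|\varphi_1\|_\infty=1$. Then there exists $C>0$ such that for all $x\in\Omega$, \[ \psi_1(x)\ge C\operatorname{dist}(x,\partial\Omega)\quad\text{and}\quad \varphi_1(x)\le -C\operatorname{dist}(x,\partial\Omega). \]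
   Context: $\lambda_1(A)$ and $\lambda_N(A)$ are the smallest and largest eigenvalues of a symmetric matrix $A$. The equations are understood in the viscosity sense. *)

(* Defs.v *)
From mathcomp Require Import ssreflect ssrfun ssrbool eqtype ssrnat seq fintype.
From Stdlib Require Import Reals.
Open Scope R_scope.

Definition vec (N : nat) := 'I_N -> R.
Definition mat (N : nat) := 'I_N -> 'I_N -> R.

Definition sumv {N : nat} (f : 'I_N -> R) : R :=
  foldr Rplus 0 (map f (enum 'I_N)).

Definition dotv {N : nat} (u v : vec N) : R := sumv (fun i => u i * v i).
Definition normv {N : nat} (u : vec N) : R := sqrt (dotv u u).
Definition subv {N : nat} (u v : vec N) : vec N := fun i => u i - v i.
Definition distv {N : nat} (x y : vec N) : R := normv (subv x y).
Definition mulmv {N : nat} (X : mat N) (v : vec N) : vec N :=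
  fun i => sumv (fun j => X i j * v j).
Definition segpt {N : nat} (x y : vec N) (t : R) : vec N :=
  fun i => (1 - t) * x i + t * y i.

Definition is_open {N : nat} (O : vec N -> Prop) : Prop :=
  forall x, O x -> exists r, 0 < r /\ forall y, distv y x < r -> O y.
Definition closure {N : nat} (O : vec N -> Prop) (x : vec N) : Prop :=
  forall e, 0 < e -> exists y, O y /\ distv y x < e.
Definition boundary {N : nat} (O : vec N -> Prop) (x : vec N) : Prop :=
  closure O x /\ ~ O x.
Definition is_bounded {N : nat} (O : vec N -> Prop) : Prop :=
  exists M, forall x, O x -> normv x <= M.
Definition is_connected {N : nat} (O : vec N -> Prop) : Prop :=
  forall A B : vec N -> Prop, is_open A -> is_open B ->
    (forall x, O x -> A x \/ B x) ->
    (forall x, O x -> A x -> B x -> False) ->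
    (exists x, O x /\ A x) -> (exists x, O x /\ B x) -> False.
Definition is_domain {N : nat} (O : vec N -> Prop) : Prop :=
  is_open O /\ is_connected O /\ exists x, O x.
Definition strictly_convex {N : nat} (O : vec N -> Prop) : Prop :=
  forall x y t, closure O x -> closure O y -> x <> y -> 0 < t < 1 -> O (segpt x y t).
Definition interior_ball_condition {N : nat} (O : vec N -> Prop) : Prop :=
  forall z, boundary O z -> exists y r, 0 < r /\
    (forall w, distv w y < r -> O w) /\ distv z y = r.

Definition is_dist_bd {N : nat} (O : vec N -> Prop) (x : vec N) (d : R) : Prop :=
  (forall y, boundary O y -> d <= distv x y) /\
  (forall d', (forall y, boundary O y -> d' <= distv x y) -> d' <= d).

Definition continuous_on {N : nat} (S : vec N -> Prop) (u : vec N -> R) : Prop :=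
  forall x, S x -> forall e, 0 < e -> exists dl, 0 < dl /\
    forall y, S y -> distv y x < dl -> Rabs (u y - u x) < e.
Definition is_sup_norm {N : nat} (O : vec N -> Prop) (u : vec N -> R) (m : R) : Prop :=
  (forall x, closure O x -> Rabs (u x) <= m) /\
  (forall m', (forall x, closure O x -> Rabs (u x) <= m') -> m <= m').

Definition symmetric {N : nat} (X : mat N) : Prop := forall i j, X i j = X j i.
Definition is_eigenvalue {N : nat} (X : mat N) (l : R) : Prop :=
  exists v : vec N, (exists i, v i <> 0) /\ forall i, mulmv X v i = l * v i.
Definition is_lam_max {N : nat} (X : mat N) (l : R) : Prop :=
  is_eigenvalue X l /\ forall m, is_eigenvalue X m -> m <= l.
Definition is_lam_min {N : nat} (X : mat N) (l : R) : Prop :=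
  is_eigenvalue X l /\ forall m, is_eigenvalue X m -> l <= m.

Definition quad_expansion {N : nat} (u : vec N -> R) (x0 p : vec N) (X : mat N)
  (x : vec N) : R :=
  u x0 + dotv p (subv x x0) + / 2 * dotv (mulmv X (subv x x0)) (subv x x0).

Definition superjet {N : nat} (O : vec N -> Prop) (u : vec N -> R) (x0 p : vec N)
  (X : mat N) : Prop :=
  symmetric X /\ forall e, 0 < e -> exists dl, 0 < dl /\
    forall x, O x -> distv x x0 < dl ->
      u x <= quad_expansion u x0 p X x + e * (distv x x0) ^ 2.
Definition subjet {N : nat} (O : vec N -> Prop) (u : vec N -> R) (x0 p : vec N)
  (X : mat N) : Prop :=
  symmetric X /\ forall e, 0 < e -> exists dl, 0 < dl /\
    forall x, O x -> distv x x0 < dl ->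
      quad_expansion u x0 p X x - e * (distv x x0) ^ 2 <= u x.

Definition visc_sol_lamN {N : nat} (O : vec N -> Prop) (mu : R) (u : vec N -> R) : Prop :=
  continuous_on O u /\
  (forall x0 p X l, O x0 -> superjet O u x0 p X -> is_lam_max X l -> - l <= mu * u x0) /\
  (forall x0 p X l, O x0 -> subjet O u x0 p X -> is_lam_max X l -> - l >= mu * u x0).

Definition visc_sol_lam1 {N : nat} (O : vec N -> Prop) (mu : R) (u : vec N -> R) : Prop :=
  continuous_on O u /\
  (forall x0 p X l, O x0 -> superjet O u x0 p X -> is_lam_min X l -> - l <= mu * u x0) /\
  (forall x0 p X l, O x0 -> subjet O u x0 p X -> is_lam_min X l -> - l >= mu * u x0).

(* Main.v *)
Require Import Defs.
From mathcomp Require Import ssreflect ssrfun ssrbool eqtype ssrnat seq fintype.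
From Stdlib Require Import Reals Lra Psatz FunctionalExtensionality ClassicalEpsilon Classical.
Open Scope R_scope.

Definition fsum {I : Type} (s : seq I) (f : I -> R) : R := foldr Rplus 0 (map f s).

Lemma fsum_nil {I} (f : I -> R) : fsum [::] f = 0.
Proof. reflexivity. Qed.
Lemma fsum_cons {I} (a : I) s f : fsum (a :: s) f = f a + fsum s f.
Proof. reflexivity. Qed.

Lemma fsum_ext {I} (s : seq I) f g : (forall i, f i = g i) -> fsum s f = fsum s g.
Proof. move=> H; elim: s => [|a s IH] //=; rewrite !fsum_cons IH H //. Qed.

Lemma fsum_lin {I} (s : seq I) a b f g :
  fsum s (fun i => a * f i + b * g i) = a * fsum s f + b * fsum s g.
Proof. elim: s => [|c s IH]; rewrite ?fsum_nil ?fsum_cons ?IH; [ring|ring]. Qed.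

Lemma fsum_le {I} (s : seq I) f g : (forall i, f i <= g i) -> fsum s f <= fsum s g.
Proof. move=> H; elim: s => [|c s IH]; rewrite ?fsum_nil ?fsum_cons; [lra|]. have := H c; lra. Qed.

Lemma fsum_0 {I} (s : seq I) : fsum s (fun _ => 0) = 0.
Proof. elim: s => [|c s IH]; rewrite ?fsum_nil ?fsum_cons ?IH; lra. Qed.

Lemma fsum_term {I : eqType} (s : seq I) f i : (forall j, 0 <= f j) -> i \in s -> f i <= fsum s f.
Proof.
move=> H; elim: s => [|c s IH] //=; rewrite in_cons fsum_cons => /orP [/eqP ->|Hi].
- have := fsum_le s (fun _ => 0) f H; rewrite fsum_0; lra.
- have := IH Hi; have := H c; lra.
Qed.

Lemma fsum_delta {I : eqType} (s : seq I) (v : I -> R) i : uniq s -> i \in s ->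
  fsum s (fun j => (if i == j then 1 else 0) * v j) = v i.
Proof.
elim: s => [|c s IH] //= /andP [Hc Hu]; rewrite in_cons fsum_cons => /orP [/eqP Ei|Hi].
- subst c; rewrite eqxx.
  have -> : fsum s (fun j => (if i == j then 1 else 0) * v j) = fsum s (fun _ => 0).
  { elim: s Hc {IH Hu} => [|d s IH2] //=; rewrite in_cons negb_or => /andP [Hd Hs].
    rewrite !fsum_cons IH2 //; rewrite (negbTE Hd); ring. }
  rewrite fsum_0; ring.
- have -> : (i == c) = false by apply/negbTE; apply/eqP => E; subst; rewrite Hi in Hc.
  rewrite IH //; ring.
Qed.

Lemma fsum_cv {I} (s : seq I) (f : nat -> I -> R) l :
  (forall i, Un_cv (fun n => f n i) (l i)) -> Un_cv (fun n => fsum s (f n)) (fsum s l).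
Proof.
move=> H; elim: s => [|c s IH].
- rewrite /fsum /=; move=> e He; exists 0%nat => n _; rewrite /R_dist Rminus_diag Rabs_R0 //.
- rewrite fsum_cons; apply (CV_plus (fun n => f n c) (fun n => fsum s (f n))) => //.
Qed.

Lemma sumvE {N} (f : 'I_N -> R) : sumv f = fsum (enum 'I_N) f.
Proof. reflexivity. Qed.
Lemma sumv_ext {N} (f g : 'I_N -> R) : (forall i, f i = g i) -> sumv f = sumv g.
Proof. apply fsum_ext. Qed.
Lemma sumv_lin {N} a b (f g : 'I_N -> R) :
  sumv (fun i => a * f i + b * g i) = a * sumv f + b * sumv g.
Proof. apply fsum_lin. Qed.
Lemma sumv_le {N} (f g : 'I_N -> R) : (forall i, f i <= g i) -> sumv f <= sumv g.
Proof. apply fsum_le. Qed.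
Lemma sumv_0 {N} : sumv (fun _ : 'I_N => 0) = 0.
Proof. apply fsum_0. Qed.
Lemma sumv_term {N} (f : 'I_N -> R) i : (forall j, 0 <= f j) -> f i <= sumv f.
Proof. move=> H; apply fsum_term => //; rewrite mem_enum //. Qed.
Lemma sumv_delta {N} (v : 'I_N -> R) i : sumv (fun j => (if i == j then 1 else 0) * v j) = v i.
Proof. apply fsum_delta; [apply enum_uniq|rewrite mem_enum //]. Qed.
Lemma sumv_cv {N} (f : nat -> 'I_N -> R) l :
  (forall i, Un_cv (fun n => f n i) (l i)) -> Un_cv (fun n => sumv (f n)) (sumv l).
Proof. apply fsum_cv. Qed.
Lemma sumv_add {N} (f g : 'I_N -> R) : sumv (fun i => f i + g i) = sumv f + sumv g.
Proof. rewrite -(Rmult_1_l (sumv f)) -(Rmult_1_l (sumv g)) -sumv_lin; apply sumv_ext => i; ring. Qed.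
Lemma sumv_scal {N} c (f : 'I_N -> R) : sumv (fun i => c * f i) = c * sumv f.
Proof. have := sumv_lin c 0 f f; rewrite Rmult_0_l Rplus_0_r => <-; apply sumv_ext => i; ring. Qed.
Lemma sumv_nonneg {N} (f : 'I_N -> R) : (forall i, 0 <= f i) -> 0 <= sumv f.
Proof. move=> H; rewrite -(@sumv_0 N); apply sumv_le => //. Qed.
Lemma dotv_lin_l {N} a b (u v w : vec N) :
  dotv (fun i => a * u i + b * v i) w = a * dotv u w + b * dotv v w.
Proof. rewrite /dotv -sumv_lin; apply sumv_ext => i; ring. Qed.
Lemma dotv_sym {N} (u v : vec N) : dotv u v = dotv v u.
Proof. rewrite /dotv; apply sumv_ext => i; ring. Qed.
Lemma dotv_nonneg {N} (v : vec N) : 0 <= dotv v v.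
Proof. apply sumv_nonneg => i; nra. Qed.
Lemma normv_nonneg {N} (v : vec N) : 0 <= normv v.
Proof. apply sqrt_pos. Qed.
Lemma normv_sq {N} (v : vec N) : normv v * normv v = dotv v v.
Proof. apply sqrt_sqrt, dotv_nonneg. Qed.
Lemma normv_scal {N} c (v : vec N) : normv (fun i => c * v i) = Rabs c * normv v.
Proof.
rewrite /normv /dotv.
have -> : sumv (fun i => c * v i * (c * v i)) = (c * c) * sumv (fun i => v i * v i).
{ rewrite -sumv_scal; apply sumv_ext => i; ring. }
rewrite sqrt_mult; [|nra|apply dotv_nonneg]. rewrite -(sqrt_Rsqr_abs c) /Rsqr //. 
Qed.
Lemma dotv_quad {N} (u v : vec N) t :
  dotv (fun i => u i + t * v i) (fun i => u i + t * v i) =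
  dotv u u + 2 * t * dotv u v + t * t * dotv v v.
Proof.
rewrite /dotv.
have -> : sumv (fun i => (u i + t * v i) * (u i + t * v i)) =
  sumv (fun i => 1 * (u i * u i) + 1 * ((2 * t) * (u i * v i) + (t * t) * (v i * v i))).
{ apply sumv_ext => i; ring. }
rewrite sumv_lin sumv_lin; ring.
Qed.
Lemma cs_sq {N} (u v : vec N) : dotv u v * dotv u v <= dotv u u * dotv v v.
Proof.
set A := dotv u u; set B := dotv v v; set C := dotv u v.
have Hq t : 0 <= A + 2 * t * C + t * t * B.
{ rewrite /A /B /C -dotv_quad; apply dotv_nonneg. }
have HA : 0 <= A by apply dotv_nonneg. have HB : 0 <= B by apply dotv_nonneg.
destruct (Rle_lt_or_eq_dec 0 B HB) as [Bp|B0].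
- have := Hq (- C / B). 
  have -> : A + 2 * (- C / B) * C + - C / B * (- C / B) * B = A - C * C / B by field; lra.
  move=> H. have : C * C / B <= A by lra.
  move=> H2. have E : C * C = (C * C / B) * B by field; lra. rewrite E. nra.
- rewrite -B0. destruct (Req_dec C 0) as [C0|Cn].
  + rewrite C0; lra.
  + have := Hq (- (A + 1) / (2 * C)).
    have -> : A + 2 * (- (A + 1) / (2 * C)) * C + - (A + 1) / (2 * C) * (- (A + 1) / (2 * C)) * B
      = -1 by rewrite -B0; field; auto. lra.
Qed.
Lemma cs {N} (u v : vec N) : Rabs (dotv u v) <= normv u * normv v.
Proof.
rewrite /normv -sqrt_mult; try apply dotv_nonneg.
rewrite -(sqrt_Rsqr_abs (dotv u v)); apply sqrt_le_1_alt. rewrite /Rsqr; apply cs_sq.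
Qed.
Lemma normv_tri {N} (u v : vec N) : normv (fun i => u i + v i) <= normv u + normv v.
Proof.
have H1 := normv_nonneg u; have H2 := normv_nonneg v.
have H3 := normv_nonneg (fun i => u i + v i).
apply Rsqr_incr_0_var; [|lra]. rewrite /Rsqr normv_sq.
have -> : (fun i => u i + v i) = (fun i => u i + 1 * v i) by apply functional_extensionality => i; ring.
rewrite dotv_quad -(normv_sq u) -(normv_sq v).
have := cs u v. have := Rle_abs (dotv u v). nra.
Qed.
Lemma coord_le_normv {N} (v : vec N) i : Rabs (v i) <= normv v.
Proof.
rewrite -sqrt_Rsqr_abs; apply sqrt_le_1_alt; rewrite /Rsqr.
apply (sumv_term (fun j => v j * v j)) => j; nra.
Qed.
Lemma dotv_zero {N} (v : vec N) : dotv v v = 0 -> forall i, v i = 0.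
Proof.
move=> H i. have := sumv_term (fun j => v j * v j) i (fun j => ltac:(nra)).
rewrite -/(dotv v v) H. nra.
Qed.
Lemma normv_pos {N} (v : vec N) i : v i <> 0 -> 0 < normv v.
Proof.
move=> Hi. have := coord_le_normv v i. have := Rabs_pos_lt _ Hi. lra.
Qed.
Lemma distv_sym {N} (x y : vec N) : distv x y = distv y x.
Proof.
rewrite /distv /normv /dotv /subv; f_equal; apply sumv_ext => i; ring.
Qed.
Lemma distv_tri {N} (x y z : vec N) : distv x z <= distv x y + distv y z.
Proof.
rewrite /distv. have := normv_tri (subv x y) (subv y z).
have -> : (fun i => subv x y i + subv y z i) = subv x z.
{ apply functional_extensionality => i; rewrite /subv; ring. } done.
Qed.
Lemma distv_refl {N} (x : vec N) : distv x x = 0.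
Proof.
rewrite /distv /normv /dotv /subv.
have -> : sumv (fun i => (x i - x i) * (x i - x i)) = 0.
{ rewrite -(@sumv_0 N); apply sumv_ext => i; ring. } apply sqrt_0.
Qed.
Lemma abs_le x a : Rabs x <= a -> - a <= x <= a.
Proof. unfold Rabs; destruct (Rcase_abs x); lra. Qed.
Lemma abs_lt x a : Rabs x < a -> - a < x < a.
Proof. unfold Rabs; destruct (Rcase_abs x); lra. Qed.
Lemma le_abs x a : - a <= x <= a -> Rabs x <= a.
Proof. unfold Rabs; destruct (Rcase_abs x); lra. Qed.
Lemma lt_abs x a : - a < x < a -> Rabs x < a.
Proof. unfold Rabs; destruct (Rcase_abs x); lra. Qed.

Lemma choice_fun {A B : Type} (P : A -> B -> Prop) :
  (forall a, exists b, P a b) -> exists f : A -> B, forall a, P a (f a).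
Proof.
move=> H. exists (fun a => proj1_sig (constructive_indefinite_description _ (H a))).
move=> a; exact: (proj2_sig (constructive_indefinite_description _ (H a))).
Qed.

Lemma inv_small eps : 0 < eps -> exists k, forall n, (k <= n)%nat -> / (INR n + 1) < eps.
Proof.
move=> He; have [k [Hk Kp]] := archimed_cor1 eps He; exists k => n Hn.
have Hkn : INR k <= INR n by apply le_INR; apply/leP.
have Hk0 : 0 < INR k by apply lt_0_INR; exact Kp.
apply: Rle_lt_trans Hk. apply Rinv_le_contravar; lra.
Qed.

Lemma incr_mono (phi : nat -> nat) : (forall n, (phi n < phi n.+1)%nat) ->
  forall m n, (m < n)%nat -> (phi m < phi n)%nat.
Proof.
move=> H m n; elim: n => [|n IH] //. rewrite ltnS leq_eqVlt => /orP [/eqP ->|Hm].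
- apply H.
- apply: ltn_trans (IH Hm) (H n).
Qed.

Lemma incr_ge (phi : nat -> nat) : (forall n, (phi n < phi n.+1)%nat) -> forall n, (n <= phi n)%nat.
Proof. move=> H; elim => [|n IH] //. apply: leq_ltn_trans IH (H n). Qed.

Lemma cv_subseq (u : nat -> R) l phi : (forall n, (phi n < phi n.+1)%nat) ->
  Un_cv u l -> Un_cv (fun n => u (phi n)) l.
Proof.
move=> Hp Hu e He; have [k Hk] := Hu e He; exists k => n Hn; apply Hk.
apply/leP; apply: (leq_trans (n:=n)); [apply/leP; exact Hn|exact (incr_ge phi Hp n)].
Qed.

Fixpoint subidx (f : nat -> nat -> nat) (k : nat) : nat :=
  match k with 0 => f 0%nat 0%nat | S k' => f (S k') (S (subidx f k')) end.

Lemma bw1 (u : nat -> R) B : (forall n, Rabs (u n) <= B) ->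
  exists phi : nat -> nat, (forall n, (phi n < phi n.+1)%nat) /\ exists l, Un_cv (fun n => u (phi n)) l.
Proof.
move=> HB.
have [l Hl] := Bolzano_Weierstrass u (fun c => - B <= c <= B) (compact_P3 _ _)
  (fun n => ltac:(have := HB n; move/abs_le => //)).
have Hex : forall k M, exists p, (M <= p)%nat /\ Rabs (u p - l) < / (INR k + 1).
{ move=> k M.
  have Hpos : 0 < / (INR k + 1) by apply Rinv_0_lt_compat; have := pos_INR k; lra.
  have Hnb : neighbourhood (fun y => Rabs (y - l) < / (INR k + 1)) l.
  { exists (mkposreal _ Hpos) => y Hy; exact Hy. }
  have [p [Hp1 Hp2]] := Hl (fun y => Rabs (y - l) < / (INR k + 1)) M Hnb.
  exists p; split => //; apply/leP; exact Hp1. }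
have [f Hf] := choice_fun (fun (kM : nat * nat) p => (kM.2 <= p)%nat /\ Rabs (u p - l) < / (INR kM.1 + 1))
  (fun kM => Hex kM.1 kM.2).
pose g k M := f (k, M).
exists (subidx g); split.
- move=> n /=; have := (Hf (n.+1, (subidx g n).+1)).1 => /=. rewrite /g //.
- exists l => e He; have [k Hk] := inv_small e He; exists k => n Hn.
  rewrite /R_dist.
  have H1 : Rabs (u (subidx g n) - l) < / (INR n + 1).
  { case: n {Hn} => [|n] /=; [exact: (Hf (0%nat,0%nat)).2 | exact: (Hf (n.+1, (subidx g n).+1)).2]. }
  apply: Rlt_trans H1 _; apply Hk; apply/leP; exact Hn.
Qed.

Lemma bw_list {N} (x : nat -> vec N) B (s : seq 'I_N) : (forall n i, Rabs (x n i) <= B) ->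
  exists phi : nat -> nat, (forall n, (phi n < phi n.+1)%nat) /\
    exists y : vec N, forall i, i \in s -> Un_cv (fun n => x (phi n) i) (y i).
Proof.
move=> HB; elim: s => [|i s [phi [Hphi [y Hy]]]].
- exists (fun n : nat => n); split => //; exists (x 0%nat) => //.
- have [phi' [Hphi' [c Hc]]] := bw1 (fun n => x (phi n) i) B (fun n => HB _ _).
  exists (fun n => phi (phi' n)); split.
  + move=> n; apply incr_mono => //.
  + exists (fun j => if j == i then c else y j) => j; rewrite in_cons => /orP [/eqP ->|Hj].
    * rewrite eqxx; exact Hc.
    * case: eqP => [->|_]; first exact Hc.
      exact: (cv_subseq (fun n => x (phi n) j) (y j) phi' Hphi' (Hy j Hj)).
Qed.

Lemma bwN {N} (x : nat -> vec N) B : (forall n i, Rabs (x n i) <= B) ->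
  exists phi : nat -> nat, (forall n, (phi n < phi n.+1)%nat) /\
    exists y : vec N, forall i, Un_cv (fun n => x (phi n) i) (y i).
Proof.
move=> HB; have [phi [Hp [y Hy]]] := bw_list x B (enum 'I_N) HB.
exists phi; split => //; exists y => i; apply Hy; rewrite mem_enum //.
Qed.

Lemma evt {N} (K : vec N -> Prop) (F : vec N -> R) B (x00 : vec N) :
  K x00 -> (forall x, K x -> forall i, Rabs (x i) <= B) ->
  (forall (xs : nat -> vec N) y, (forall n, K (xs n)) -> (forall i, Un_cv (fun n => xs n i) (y i)) ->
     K y /\ Un_cv (fun n => F (xs n)) (F y)) ->
  (exists lb, forall x, K x -> lb <= F x) ->
  exists y, K y /\ forall x, K x -> F y <= F x.
Proof.
move=> HK0 HB Hcl [lb Hlb].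
pose E r := exists x, K x /\ r = - F x.
have HbE : bound E.
{ exists (- lb) => r [x [Kx ->]]; have := Hlb x Kx; lra. }
have HnE : exists r, E r by exists (- F x00); exists x00; split.
have [m [Hm1 Hm2]] := completeness E HbE HnE.
have Hex : forall n : nat, exists x, K x /\ F x < - m + / (INR n + 1).
{ move=> n; apply NNPP => Hn.
  have Hpos : 0 < / (INR n + 1) by apply Rinv_0_lt_compat; have := pos_INR n; lra.
  have : m <= m - / (INR n + 1); [|lra].
  apply Hm2 => r [x [Kx ->]]. apply Rnot_lt_le => H; apply Hn; exists x; split => //; lra. }
have [xs Hxs] := choice_fun _ Hex.
have [phi [Hphi [y Hy]]] := bwN xs B (fun n i => HB _ (Hxs n).1 i).
have [Ky Hcv] := Hcl (fun n => xs (phi n)) y (fun n => (Hxs _).1) Hy.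
exists y; split => // x Kx.
have Hx : - F x <= m by apply Hm1; exists x.
suff : F y <= - m by lra.
apply Rnot_lt_le => Hlt.
have He : 0 < (F y + m) / 2 by lra.
have [k1 Hk1] := Hcv _ He. have [k2 Hk2] := inv_small _ He.
pose n := (k1 + k2)%nat.
have := Hk1 n ltac:(apply/leP; rewrite leq_addr //).
have Hle : (k2 <= phi n)%nat.
{ apply: (@leq_trans n); [rewrite /n leq_addl //|exact (incr_ge phi Hphi n)]. }
have := Hk2 (phi n) Hle.
have := (Hxs (phi n)).2. rewrite /R_dist => H1 H2 H3.
have := abs_lt _ _ H3. lra.
Qed.
Definition delta {N} (i j : 'I_N) : R := if i == j then 1 else 0.
Definition Xmat {N} (D : vec N) (c A : R) : mat N := fun i j => c * D i * D j - 2 * A * delta i j.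

Lemma mulmv_X {N} (D v : vec N) c A i : mulmv (Xmat D c A) v i = c * D i * dotv D v - 2 * A * v i.
Proof.
rewrite /mulmv /Xmat /dotv.
have -> : sumv (fun j => (c * D i * D j - 2 * A * delta i j) * v j) =
  sumv (fun j => (c * D i) * (D j * v j) + (- 2 * A) * (delta i j * v j)) by apply sumv_ext => j; ring.
rewrite sumv_lin sumv_delta; ring.
Qed.

Lemma Xmat_sym {N} (D : vec N) c A : Defs.symmetric (Xmat D c A).
Proof. move=> i j; rewrite /Xmat /delta eq_sym; ring. Qed.

Lemma dot_mulmv_X {N} (D h : vec N) c A :
  dotv (mulmv (Xmat D c A) h) h = c * dotv D h * dotv D h - 2 * A * dotv h h.
Proof.
rewrite {1}/dotv.
have -> : sumv (fun i => mulmv (Xmat D c A) h i * h i) =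
  sumv (fun i => (c * dotv D h) * (D i * h i) + (- 2 * A) * (h i * h i)).
{ apply sumv_ext => i; rewrite mulmv_X; ring. }
rewrite sumv_lin; rewrite /dotv; ring.
Qed.

Lemma dotv_pos_coord {N} (D : vec N) : 0 < dotv D D -> exists i, D i <> 0.
Proof.
move=> Hq; apply NNPP => H.
have : dotv D D = 0.
{ rewrite /dotv -(@sumv_0 N); apply sumv_ext => i.
  have : D i = 0 by apply NNPP => Hi; apply H; exists i. move=> ->; ring. }
lra.
Qed.

Lemma Xmat_lam_max {N} (D : vec N) c A : 0 < dotv D D -> 0 <= c ->
  is_lam_max (Xmat D c A) (c * dotv D D - 2 * A).
Proof.
move=> Hq Hc; split.
- have [i Hi] := dotv_pos_coord D Hq; exists D; split; first by exists i.
  move=> j; rewrite mulmv_X; ring.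
- move=> m [v [[i Hi] Hv]].
  have Hdot : (c * dotv D D - 2 * A) * dotv D v = m * dotv D v.
  { have -> : m * dotv D v = dotv D (mulmv (Xmat D c A) v).
    { rewrite /dotv -sumv_scal; apply sumv_ext => j; rewrite Hv; ring. }
    rewrite /dotv.
    have -> : sumv (fun j => D j * mulmv (Xmat D c A) v j) =
      sumv (fun j => (c * dotv D v) * (D j * D j) + (- 2 * A) * (D j * v j)).
    { apply sumv_ext => j; rewrite mulmv_X; ring. }
    rewrite sumv_lin /dotv; ring. }
  destruct (Req_dec (dotv D v) 0) as [H0|Hn].
  + have := Hv i; rewrite mulmv_X H0 => Heq.
    have : m = - 2 * A.
    { apply (Rmult_eq_reg_r (v i)) => //; lra. }
    have : 0 <= c * dotv D D by apply Rmult_le_pos => //; lra. lra.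
  + have := Rmult_eq_reg_r _ _ _ Hdot Hn. lra.
Qed.
Definition sig_ {N} (x0 D x : vec N) : R := dotv (subv x x0) D / dotv D D.
Definition wv {N} (x0 D x : vec N) : vec N := fun i => x i - x0 i - sig_ x0 D x * D i.
Definition ww {N} (x0 D x : vec N) : R := dotv (wv x0 D x) (wv x0 D x).

Lemma sig_line {N} (x0 D : vec N) s : 0 < dotv D D -> sig_ x0 D (fun i => x0 i + s * D i) = s.
Proof.
move=> Hq; rewrite /sig_.
have -> : dotv (subv (fun i => x0 i + s * D i) x0) D = s * dotv D D.
{ rewrite /dotv -sumv_scal; apply sumv_ext => i; rewrite /subv; ring. }
field; lra.
Qed.

Lemma ww_line {N} (x0 D : vec N) s : 0 < dotv D D -> ww x0 D (fun i => x0 i + s * D i) = 0.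
Proof.
move=> Hq; rewrite /ww /wv sig_line //.
rewrite /dotv -(@sumv_0 N); apply sumv_ext => i; ring.
Qed.

Lemma ww_eq {N} (x0 D x : vec N) : 0 < dotv D D ->
  ww x0 D x = dotv (subv x x0) (subv x x0) - dotv D D * (sig_ x0 D x * sig_ x0 D x).
Proof.
move=> Hq; rewrite /ww.
have -> : wv x0 D x = (fun i => subv x x0 i + (- sig_ x0 D x) * D i).
{ apply functional_extensionality => i; rewrite /wv /subv; ring. }
rewrite dotv_quad.
have E : dotv (subv x x0) D = sig_ x0 D x * dotv D D by rewrite /sig_; field; lra.
rewrite E; ring.
Qed.

Lemma dot_split {N} (x x1 x0 D : vec N) :
  dotv (subv x x0) D = dotv (subv x1 x0) D + dotv (subv x x1) D.
Proof.
rewrite /dotv -sumv_add; apply sumv_ext => i; rewrite /subv; ring.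
Qed.

Lemma sig_diff {N} (x0 D x x1 : vec N) : 0 < dotv D D ->
  sig_ x0 D x - sig_ x0 D x1 = dotv (subv x x1) D / dotv D D.
Proof. move=> Hq; rewrite /sig_ (dot_split x x1); field; lra. Qed.

Lemma normv_sqr_dot {N} (D : vec N) : dotv D D = normv D * normv D.
Proof. by rewrite normv_sq. Qed.

Lemma sig_bound {N} (x0 D x x1 : vec N) : 0 < dotv D D ->
  Rabs (sig_ x0 D x - sig_ x0 D x1) * normv D <= distv x x1.
Proof.
move=> Hq; rewrite sig_diff //.
have Hn : 0 < normv D.
{ have := normv_nonneg D; rewrite normv_sqr_dot in Hq. nra. }
rewrite /Rdiv Rabs_mult Rabs_inv (Rabs_right (dotv D D)); [|lra].
have := cs (subv x x1) D. rewrite -/(distv x x1) normv_sqr_dot => Hc.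
have -> : Rabs (dotv (subv x x1) D) * / (normv D * normv D) * normv D = Rabs (dotv (subv x x1) D) / normv D
  by field; lra.
apply (Rmult_le_reg_r (normv D)) => //.
have -> : Rabs (dotv (subv x x1) D) / normv D * normv D = Rabs (dotv (subv x x1) D) by field; lra.
exact Hc.
Qed.

Lemma wv_bound {N} (x0 D x x1 : vec N) : 0 < dotv D D ->
  normv (wv x0 D x) <= normv (wv x0 D x1) + 2 * distv x x1.
Proof.
move=> Hq.
have -> : wv x0 D x = (fun i => wv x0 D x1 i + (subv x x1 i + (- (sig_ x0 D x - sig_ x0 D x1)) * D i)).
{ apply functional_extensionality => i; rewrite /wv /subv; ring. }
apply: Rle_trans (normv_tri _ _) _.
have := normv_tri (subv x x1) (fun i => (- (sig_ x0 D x - sig_ x0 D x1)) * D i).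
rewrite normv_scal Rabs_Ropp -/(distv x x1).
have := sig_bound x0 D x x1 Hq. lra.
Qed.

Definition Pq {N} (x0 D : vec N) (al ep t A : R) (x : vec N) : R :=
  al * sig_ x0 D x + ep * ((sig_ x0 D x - t) * (sig_ x0 D x - t)) - A * ww x0 D x.

Definition pvec {N} (x0 D x1 : vec N) (al ep t A : R) : vec N :=
  fun i => (al + 2 * ep * (sig_ x0 D x1 - t) + 2 * A * dotv D D * sig_ x0 D x1) / dotv D D * D i
           + (- 2 * A) * (x1 i - x0 i).

Lemma quad_id {N} (x0 D x x1 : vec N) al ep t A : 0 < dotv D D ->
  Pq x0 D al ep t A x - Pq x0 D al ep t A x1 =
  dotv (pvec x0 D x1 al ep t A) (subv x x1) +
  / 2 * dotv (mulmv (Xmat D (2 * (ep + A * dotv D D) / (dotv D D * dotv D D)) A) (subv x x1)) (subv x x1).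
Proof.
move=> Hq. rewrite /Pq !ww_eq // dot_mulmv_X.
have Es : sig_ x0 D x = sig_ x0 D x1 + dotv (subv x x1) D / dotv D D.
{ have := sig_diff x0 D x x1 Hq; lra. }
have Er : subv x x0 = (fun i => subv x1 x0 i + 1 * subv x x1 i).
{ apply functional_extensionality => i; rewrite /subv; ring. }
rewrite Er dotv_quad.
have Ep : dotv (pvec x0 D x1 al ep t A) (subv x x1) =
  (al + 2 * ep * (sig_ x0 D x1 - t) + 2 * A * dotv D D * sig_ x0 D x1) / dotv D D * dotv D (subv x x1)
  + (- 2 * A) * dotv (subv x1 x0) (subv x x1).
{ rewrite /pvec.
  have -> : (fun i => (al + 2 * ep * (sig_ x0 D x1 - t) + 2 * A * dotv D D * sig_ x0 D x1) / dotv D D * D i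
           + (- 2 * A) * (x1 i - x0 i)) = (fun i =>
     (al + 2 * ep * (sig_ x0 D x1 - t) + 2 * A * dotv D D * sig_ x0 D x1) / dotv D D * D i
           + (- 2 * A) * subv x1 x0 i) by [].
  by rewrite dotv_lin_l. }
rewrite Ep Es (dotv_sym D (subv x x1)).
field; lra.
Qed.

Lemma subjet_of_ineq {N} (Om : vec N -> Prop) u x1 p X dl :
  Defs.symmetric X -> 0 < dl ->
  (forall x, Om x -> distv x x1 < dl ->
     u x1 + dotv p (subv x x1) + / 2 * dotv (mulmv X (subv x x1)) (subv x x1) <= u x) ->
  subjet Om u x1 p X.
Proof.
move=> Hs Hdl H; split => // e He; exists dl; split => // x Hx Hd.
rewrite /quad_expansion. have := H x Hx Hd.
have : 0 <= e * distv x x1 ^ 2 by apply Rmult_le_pos; [lra|apply pow2_ge_0]. lra.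
Qed.
Lemma cv_const c : Un_cv (fun _ : nat => c) c.
Proof. move=> e He; exists 0%nat => n _; rewrite /R_dist Rminus_diag Rabs_R0 //. Qed.

Lemma cv_le (s : nat -> R) l c : Un_cv s l -> (forall n, s n <= c) -> l <= c.
Proof.
move=> Hs Hc; apply Rnot_lt_le => H.
have [k Hk] := Hs (l - c) ltac:(lra).
have := Hk k (le_n k); rewrite /R_dist => /abs_lt. have := Hc k. lra.
Qed.

Lemma cv_ge (s : nat -> R) l c : Un_cv s l -> (forall n, c <= s n) -> c <= l.
Proof.
move=> Hs Hc; apply Rnot_lt_le => H.
have [k Hk] := Hs (c - l) ltac:(lra).
have := Hk k (le_n k); rewrite /R_dist => /abs_lt. have := Hc k. lra.
Qed.

Lemma sig_cv {N} (x0 D y : vec N) (xs : nat -> vec N) :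
  (forall i, Un_cv (fun n => xs n i) (y i)) -> Un_cv (fun n => sig_ x0 D (xs n)) (sig_ x0 D y).
Proof.
move=> H; rewrite /sig_ /Rdiv.
apply (CV_mult (fun n => dotv (subv (xs n) x0) D) (fun _ => / dotv D D)); last apply cv_const.
rewrite /dotv; apply (sumv_cv (fun n i => subv (xs n) x0 i * D i)) => i.
apply (CV_mult (fun n => subv (xs n) x0 i) (fun _ => D i)); last apply cv_const.
apply (CV_minus (fun n => xs n i) (fun _ => x0 i)); [apply H|apply cv_const].
Qed.

Lemma ww_cv {N} (x0 D y : vec N) (xs : nat -> vec N) :
  (forall i, Un_cv (fun n => xs n i) (y i)) -> Un_cv (fun n => ww x0 D (xs n)) (ww x0 D y).
Proof.
move=> H.
have Hw : forall i, Un_cv (fun n => wv x0 D (xs n) i) (wv x0 D y i).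
{ move=> i; rewrite /wv.
  apply (CV_minus (fun n => xs n i - x0 i) (fun n => sig_ x0 D (xs n) * D i)).
  - apply (CV_minus (fun n => xs n i) (fun _ => x0 i)); [apply H|apply cv_const].
  - apply (CV_mult (fun n => sig_ x0 D (xs n)) (fun _ => D i)); [apply sig_cv, H|apply cv_const]. }
rewrite /ww /dotv; apply (sumv_cv (fun n i => wv x0 D (xs n) i * wv x0 D (xs n) i)) => i.
apply (CV_mult (fun n => wv x0 D (xs n) i) (fun n => wv x0 D (xs n) i)); apply Hw.
Qed.

Lemma distv_cv {N} (y : vec N) (xs : nat -> vec N) :
  (forall i, Un_cv (fun n => xs n i) (y i)) ->
  forall dl, 0 < dl -> exists k, forall n, (k <= n)%coq_nat -> distv (xs n) y < dl.
Proof.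
move=> H dl Hdl.
have Hs : Un_cv (fun n => dotv (subv (xs n) y) (subv (xs n) y)) (sumv (fun i => (y i - y i) * (y i - y i))).
{ rewrite /dotv; apply (sumv_cv (fun n i => subv (xs n) y i * subv (xs n) y i)) => i.
  have Hi : Un_cv (fun n => subv (xs n) y i) (y i - y i).
  { apply (CV_minus (fun n => xs n i) (fun _ => y i)); [apply H|apply cv_const]. }
  apply (CV_mult (fun n => subv (xs n) y i) (fun n => subv (xs n) y i)); apply Hi. }
have E0 : sumv (fun i => (y i - y i) * (y i - y i)) = 0.
{ rewrite -(@sumv_0 N); apply sumv_ext => i; ring. }
rewrite E0 in Hs.
have [k Hk] := Hs (dl * dl) ltac:(nra).
exists k => n Hn; have := Hk n Hn; rewrite /R_dist Rminus_0_r => Ha.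
rewrite /distv /normv -(sqrt_square dl); [|lra].
apply sqrt_lt_1_alt; split; [apply dotv_nonneg|].
have := Rle_abs (dotv (subv (xs n) y) (subv (xs n) y)); lra.
Qed.

Lemma cont_seq {N} (S : vec N -> Prop) u (y : vec N) (xs : nat -> vec N) :
  continuous_on S u -> S y -> (forall n, S (xs n)) ->
  (forall i, Un_cv (fun n => xs n i) (y i)) -> Un_cv (fun n => u (xs n)) (u y).
Proof.
move=> Hc Sy Sx H e He.
have [dl [Hdl Hd]] := Hc y Sy e He.
have [k Hk] := distv_cv y xs H dl Hdl.
exists k => n Hn; rewrite /R_dist; apply Hd; [apply Sx|apply Hk, Hn].
Qed.
Lemma in_closure {N} (Om : vec N -> Prop) x : Om x -> closure Om x.
Proof. move=> Hx e He; exists x; split => //; rewrite distv_refl //. Qed.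

Lemma normv_wv_le {N} (x0 D x : vec N) rho : 0 <= rho -> ww x0 D x <= rho * rho ->
  normv (wv x0 D x) <= rho.
Proof.
move=> Hr Hw; rewrite /normv -(sqrt_square rho) //; apply sqrt_le_1_alt; exact Hw.
Qed.

Lemma K_in_Om {N} (Om : vec N -> Prop) (x0 D x : vec N) a b ra rb rho :
  strictly_convex Om -> 0 < dotv D D -> a < b -> 0 <= rho -> rho < ra -> rho < rb ->
  (forall y, distv y (fun i => x0 i + a * D i) < ra -> Om y) ->
  (forall y, distv y (fun i => x0 i + b * D i) < rb -> Om y) ->
  a <= sig_ x0 D x <= b -> ww x0 D x <= rho * rho -> Om x.
Proof.
move=> Hsc Hq Hab Hr Hra Hrb Ha Hb Hs Hw.
set s := sig_ x0 D x. set w := wv x0 D x.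
have Hnw : normv w <= rho by apply normv_wv_le.
have Ex : forall c, c = s -> x = (fun i => (x0 i + c * D i) + w i).
{ move=> c ->; apply functional_extensionality => i; rewrite /w /wv -/s; ring. }
have Hya : Om (fun i => (x0 i + a * D i) + w i).
{ apply Ha. have -> : distv (fun i => x0 i + a * D i + w i) (fun i => x0 i + a * D i) = normv w.
  { rewrite /distv; f_equal; apply functional_extensionality => i; rewrite /subv; ring. } lra. }
have Hyb : Om (fun i => (x0 i + b * D i) + w i).
{ apply Hb. have -> : distv (fun i => x0 i + b * D i + w i) (fun i => x0 i + b * D i) = normv w.
  { rewrite /distv; f_equal; apply functional_extensionality => i; rewrite /subv; ring. } lra. }
destruct (Req_dec s a) as [Esa|Nsa]; first by rewrite (Ex a) //.
destruct (Req_dec s b) as [Esb|Nsb]; first by rewrite (Ex b) //.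
have Hs' : a < s < b.
{ case: Hs => H1 H2; split.
  - case: (Rle_lt_or_eq_dec _ _ H1) => // E; exfalso; apply Nsa; rewrite E //.
  - case: (Rle_lt_or_eq_dec _ _ H2) => // E. }
set tau := (s - a) / (b - a).
have Ht : 0 < tau < 1.
{ rewrite /tau; split; [apply Rdiv_lt_0_compat; lra|].
  apply (Rmult_lt_reg_r (b - a)); [lra|]. rewrite /Rdiv Rmult_assoc Rinv_l; lra. }
have -> : x = segpt (fun i => (x0 i + a * D i) + w i) (fun i => (x0 i + b * D i) + w i) tau.
{ rewrite (Ex s) //; apply functional_extensionality => i; rewrite /segpt /tau; field; lra. }
apply Hsc; try apply in_closure => //.
move=> E. have [i Hi] := dotv_pos_coord D Hq.
have := f_equal (fun f => f i) E => /= Ei. apply Hi.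
apply (Rmult_eq_reg_l (b - a)); [|lra]. lra.
exact Ht.
Qed.
Lemma sq_le1 s t : 0 <= s <= 1 -> 0 <= t <= 1 -> (s - t) * (s - t) <= 1.
Proof. move=> H1 H2; nra. Qed.
Lemma mul_le_self e X : 0 <= e -> X <= 1 -> e * X <= e.
Proof. move=> H1 H2; nra. Qed.

Lemma concave_seg {N} (Om : vec N -> Prop) (u : vec N -> R) :
  strictly_convex Om -> is_open Om -> continuous_on (closure Om) u ->
  (forall x, Om x -> 0 < u x) ->
  (forall x1 p X l, Om x1 -> subjet Om u x1 p X -> is_lam_max X l -> l <= 0) ->
  forall x0 z t, closure Om x0 -> closure Om z -> x0 <> z -> 0 < t < 1 ->
  (1 - t) * u x0 + t * u z <= u (segpt x0 z t).
Proof.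
move=> Hsc Hop Hc Hpos Hvis x0 z t Cx0 Cz Hne Ht.
apply Rnot_lt_le => Hlt.
set (D := subv z x0) in *.
have Hq : 0 < dotv D D.
{ have := dotv_nonneg D; case/Rle_lt_or_eq_dec => // E; exfalso; apply Hne.
  apply functional_extensionality => i; have := dotv_zero D (esym E) i; rewrite /D /subv; lra. }
have HnD : 0 < normv D.
{ have := normv_nonneg D; have := normv_sqr_dot D; nra. }
set (nD := normv D) in *.
set (g0 := u x0) in *; set (g1 := u z) in *.
have Eseg : forall s, segpt x0 z s = (fun i => x0 i + s * D i).
{ move=> s; apply functional_extensionality => i; rewrite /segpt /D /subv; ring. }
set (et := (1 - t) * g0 + t * g1 - u (segpt x0 z t)) in *.
have Heta : 0 < et by rewrite /et; lra.
set (ep := et / 4) in *.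
have [d0 [Hd0 Hc0]] := Hc x0 Cx0 (et / 8) ltac:(lra).
have [d1 [Hd1 Hc1]] := Hc z Cz (et / 8) ltac:(lra).
set (G := Rabs (g0 - g1) + 1) in *.
have HG : 0 < G by have := Rabs_pos (g0 - g1); rewrite /G; lra.
set (m0 := Rmin (d0 / (4 * nD)) (et / (8 * G))) in *.
set (m1 := Rmin (d1 / (4 * nD)) (et / (8 * G))) in *.
have Hm0 : 0 < m0 by apply Rmin_pos; apply Rdiv_lt_0_compat; lra.
have Hm1 : 0 < m1 by apply Rmin_pos; apply Rdiv_lt_0_compat; lra.
set (a := Rmin (t / 2) m0) in *.
set (b := 1 - Rmin ((1 - t) / 2) m1) in *.
have Ha0 : 0 < a by apply Rmin_pos; lra.
have Hat : a < t by have := Rmin_l (t / 2) m0; rewrite -/a; lra.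
have Hb1 : b < 1.
{ have : 0 < Rmin ((1 - t) / 2) m1 by apply Rmin_pos; lra.
  rewrite /b; lra. }
have Htb : t < b by have := Rmin_l ((1 - t) / 2) m1; rewrite /b; lra.
have Ha_d : a * nD <= d0 / 4.
{ have : a <= d0 / (4 * nD) by apply: Rle_trans (Rmin_r _ _) (Rmin_l _ _).
  move=> H; have := Rmult_le_compat_r nD _ _ (Rlt_le _ _ HnD) H.
  have -> : d0 / (4 * nD) * nD = d0 / 4 by field; lra. done. }
have Ha_g : a * Rabs (g0 - g1) <= et / 8.
{ have : a <= et / (8 * G) by apply: Rle_trans (Rmin_r _ _) (Rmin_r _ _).
  move=> H; have := Rmult_le_compat_r G _ _ (Rlt_le _ _ HG) H.
  have -> : et / (8 * G) * G = et / 8 by field; lra.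
  rewrite /G. have := Rabs_pos (g0 - g1). nra. }
have Hb_d : (1 - b) * nD <= d1 / 4.
{ have : 1 - b <= d1 / (4 * nD).
  { rewrite /b. have := Rle_trans _ _ _ (Rmin_r ((1 - t) / 2) m1) (Rmin_l _ _). lra. }
  move=> H; have := Rmult_le_compat_r nD _ _ (Rlt_le _ _ HnD) H.
  have -> : d1 / (4 * nD) * nD = d1 / 4 by field; lra. done. }
have Hb_g : (1 - b) * Rabs (g0 - g1) <= et / 8.
{ have : 1 - b <= et / (8 * G).
  { rewrite /b. have := Rle_trans _ _ _ (Rmin_r ((1 - t) / 2) m1) (Rmin_r _ _). lra. }
  move=> H; have := Rmult_le_compat_r G _ _ (Rlt_le _ _ HG) H.
  have -> : et / (8 * G) * G = et / 8 by field; lra.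
  rewrite /G. have := Rabs_pos (g0 - g1). nra. }
have Hpa : Om (segpt x0 z a) by apply Hsc => //; lra.
have Hpb : Om (segpt x0 z b) by apply Hsc => //; lra.
have [ra [Hra Hba]] := Hop _ Hpa.
have [rb [Hrb Hbb]] := Hop _ Hpb.
rewrite Eseg in Hba. rewrite Eseg in Hbb.
set (rho := Rmin (Rmin (d0 / 2) (d1 / 2)) (Rmin (ra / 2) (rb / 2))) in *.
have Hrho : 0 < rho by repeat apply Rmin_pos; lra.
have Hrho0 : rho <= d0 / 2 by apply: Rle_trans (Rmin_l _ _) (Rmin_l _ _).
have Hrho1 : rho <= d1 / 2 by apply: Rle_trans (Rmin_l _ _) (Rmin_r _ _).
have Hrhoa : rho < ra.
{ have : rho <= ra / 2 by apply: Rle_trans (Rmin_r _ _) (Rmin_l _ _).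
  lra. }
have Hrhob : rho < rb.
{ have : rho <= rb / 2 by apply: Rle_trans (Rmin_r _ _) (Rmin_r _ _).
  lra. }
set (A := (Rabs g0 + Rabs g1 + ep + 1) / (rho * rho)) in *.
have HA : 0 <= A.
{ apply Rlt_le, Rdiv_lt_0_compat; [|nra]. have := Rabs_pos g0; have := Rabs_pos g1; rewrite /ep; lra. }
have EA : A * (rho * rho) = Rabs g0 + Rabs g1 + ep + 1 by rewrite /A; field; lra.
set (K := fun x => a <= sig_ x0 D x <= b /\ ww x0 D x <= rho * rho) in *.
set (Phi := fun x => u x - g0 - Pq x0 D (g1 - g0) ep t A x) in *.
have HKO : forall x, K x -> Om x.
{ move=> x [Hs Hw]. apply: (K_in_Om Om x0 D x a b ra rb rho) => //; lra. }
set (xt := segpt x0 z t) in *.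
have Kxt : K xt.
{ rewrite /K /xt Eseg sig_line // ww_line //. split; [lra|nra]. }
have Phixt : Phi xt = - et.
{ rewrite /Phi /Pq /xt Eseg sig_line // ww_line // -Eseg /et /xt. ring. }
have Hlow : forall x, K x -> - (Rabs g0 + Rabs g1) - ep <= Phi x.
{ move=> x [Hs Hw]; rewrite /Phi /Pq.
  have Hu := Hpos x (HKO x (conj Hs Hw)).
  have Hww := dotv_nonneg (wv x0 D x). rewrite -/(ww x0 D x) in Hww.
  set s := sig_ x0 D x in Hs *.
  have H1 : (1 - s) * g0 <= (1 - s) * Rabs g0 by apply Rmult_le_compat_l; [lra|apply Rle_abs].
  have H2 : s * g1 <= s * Rabs g1 by apply Rmult_le_compat_l; [lra|apply Rle_abs].
  have H3 : ep * ((s - t) * (s - t)) <= ep by apply mul_le_self; [rewrite /ep; lra|apply sq_le1; lra].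
  have H4 : 0 <= A * ww x0 D x by apply Rmult_le_pos.
  have := Rabs_pos g0; have := Rabs_pos g1. nra. }
have HB : forall x, K x -> forall i, Rabs (x i) <= normv x0 + nD + rho.
{ move=> x [Hs Hw] i.
  have Ex : x i = x0 i + (sig_ x0 D x * D i + wv x0 D x i) by rewrite /wv; ring.
  rewrite Ex. apply: Rle_trans (Rabs_triang _ _) _.
  have := coord_le_normv x0 i.
  have : Rabs (sig_ x0 D x * D i + wv x0 D x i) <= nD + rho.
  { apply: Rle_trans (Rabs_triang _ _) _. rewrite Rabs_mult.
    have := coord_le_normv D i; have := coord_le_normv (wv x0 D x) i.
    have := normv_wv_le x0 D x rho (Rlt_le _ _ Hrho) Hw.
    have : Rabs (sig_ x0 D x) <= 1 by apply le_abs; lra.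
    have := Rabs_pos (sig_ x0 D x); have := Rabs_pos (D i). rewrite -/nD. nra. }
  lra. }
have Hcl : forall (xs : nat -> vec N) y, (forall n, K (xs n)) ->
    (forall i, Un_cv (fun n => xs n i) (y i)) -> K y /\ Un_cv (fun n => Phi (xs n)) (Phi y).
{ move=> xs y Kxs Hy.
  have Hs := sig_cv x0 D y xs Hy. have Hw := ww_cv x0 D y xs Hy.
  have Ky : K y.
  { split; [split|].
    - apply: (cv_ge _ _ _ Hs) => n; exact (Kxs n).1.1.
    - apply: (cv_le _ _ _ Hs) => n; exact (Kxs n).1.2.
    - apply: (cv_le _ _ _ Hw) => n; exact (Kxs n).2. }
  split => //.
  have Hu := cont_seq (closure Om) u y xs Hc (in_closure Om y (HKO y Ky))
    (fun n => in_closure Om _ (HKO _ (Kxs n))) Hy.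
  rewrite /Phi /Pq.
  apply CV_minus; [apply CV_minus; [exact Hu|apply cv_const]|].
  apply CV_minus; [apply CV_plus|].
  - apply CV_mult; [apply cv_const|exact Hs].
  - apply CV_mult; [apply cv_const|].
    apply CV_mult; apply CV_minus; try exact Hs; apply cv_const.
  - apply CV_mult; [apply cv_const|exact Hw]. }
have [x1 [Kx1 Hmin]] := evt K Phi (normv x0 + nD + rho) xt Kxt HB Hcl
  (ex_intro _ _ Hlow).
have HPhi1 : Phi x1 <= - et by rewrite -Phixt; apply Hmin.
case: (Kx1) => [[Hs1a Hs1b] Hw1].
set s1 := sig_ x0 D x1 in Hs1a Hs1b.
set (w1 := wv x0 D x1) in *.
have Hnw1 : normv w1 <= rho by apply normv_wv_le => //; lra.
have Hww1 := dotv_nonneg w1.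
have Hs1a' : a < s1.
{ case: (Rle_lt_or_eq_dec _ _ Hs1a) => // E; exfalso.
  have Hd : distv x1 x0 < d0.
  { have -> : distv x1 x0 = normv (fun i => a * D i + w1 i).
    { rewrite /distv; f_equal; apply functional_extensionality => i.
      rewrite /subv /w1 /wv -/s1 -E; ring. }
    apply: Rle_lt_trans (normv_tri _ _) _. rewrite normv_scal Rabs_right; [|lra].
    rewrite -/nD. lra. }
  have := Hc0 x1 (in_closure Om _ (HKO _ Kx1)) Hd => /abs_lt Hux.
  move: HPhi1; rewrite /Phi /Pq -/s1 -E.
  have : (g1 - g0) * a <= a * Rabs (g0 - g1).
  { rewrite Rmult_comm; apply Rmult_le_compat_l; [lra|].
    rewrite -Rabs_Ropp; have -> : - (g0 - g1) = g1 - g0 by ring. apply Rle_abs. }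
  have : ep * ((a - t) * (a - t)) <= ep by apply mul_le_self; [rewrite /ep; lra|apply sq_le1; lra].
  have : 0 <= A * ww x0 D x1 by apply Rmult_le_pos.
  rewrite /ep; change (u x0) with g0 in Hux; lra. }
have Hs1b' : s1 < b.
{ case: (Rle_lt_or_eq_dec _ _ Hs1b) => // E; exfalso.
  have Hd : distv x1 z < d1.
  { have -> : distv x1 z = normv (fun i => (b - 1) * D i + w1 i).
    { rewrite /distv; f_equal; apply functional_extensionality => i.
      rewrite /subv /w1 /wv -/s1 E /D /subv; ring. }
    apply: Rle_lt_trans (normv_tri _ _) _. rewrite normv_scal Rabs_left; [|lra].
    rewrite -/nD. lra. }
  have := Hc1 x1 (in_closure Om _ (HKO _ Kx1)) Hd => /abs_lt Hux.
  move: HPhi1; rewrite /Phi /Pq -/s1 E.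
  have : (g0 - g1) * (1 - b) <= (1 - b) * Rabs (g0 - g1).
  { rewrite Rmult_comm; apply Rmult_le_compat_l; [lra|apply Rle_abs]. }
  have : ep * ((b - t) * (b - t)) <= ep by apply mul_le_self; [rewrite /ep; lra|apply sq_le1; lra].
  have : 0 <= A * ww x0 D x1 by apply Rmult_le_pos.
  rewrite /ep; change (u z) with g1 in Hux; lra. }
have Hw1' : ww x0 D x1 < rho * rho.
{ case: (Rle_lt_or_eq_dec _ _ Hw1) => // E; exfalso.
  have := Hlow x1 Kx1. move: HPhi1. rewrite /Phi /Pq E.
  have := Hpos x1 (HKO _ Kx1).
  change (sig_ x0 D x1) with s1.
  have H1 : (1 - s1) * g0 <= (1 - s1) * Rabs g0 by apply Rmult_le_compat_l; [lra|apply Rle_abs].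
  have H2 : s1 * g1 <= s1 * Rabs g1 by apply Rmult_le_compat_l; [lra|apply Rle_abs].
  have H3 : ep * ((s1 - t) * (s1 - t)) <= ep by apply mul_le_self; [rewrite /ep; lra|apply sq_le1; lra].
  rewrite EA. have := Rabs_pos g0; have := Rabs_pos g1. nra. }
have Hnw1' : normv w1 < rho.
{ rewrite /normv -(sqrt_square rho); [|lra]. apply sqrt_lt_1_alt; split => //. }
set (dl := Rmin (Rmin (s1 - a) (b - s1) * nD) ((rho - normv w1) / 2)) in *.
have Hdl : 0 < dl.
{ apply Rmin_pos; [apply Rmult_lt_0_compat => //; apply Rmin_pos|]; lra. }
have Hnear : forall x, Om x -> distv x x1 < dl -> K x.
{ move=> x Hx Hd.
  have Hdd1 : distv x x1 < Rmin (s1 - a) (b - s1) * nD by have := Rmin_l (Rmin (s1 - a) (b - s1) * nD) ((rho - normv w1) / 2); rewrite -/dl; lra.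
  have Hdd2 : distv x x1 < (rho - normv w1) / 2 by have := Rmin_r (Rmin (s1 - a) (b - s1) * nD) ((rho - normv w1) / 2); rewrite -/dl; lra.
  have Hsb := sig_bound x0 D x x1 Hq. rewrite -/nD -/s1 in Hsb.
  have Hsd : Rabs (sig_ x0 D x - s1) < Rmin (s1 - a) (b - s1).
  { apply (Rmult_lt_reg_r nD) => //. lra. }
  have := abs_lt _ _ Hsd. have := Rmin_l (s1 - a) (b - s1). have := Rmin_r (s1 - a) (b - s1).
  move=> Hm1' Hm2' Hs.
  split; [lra|].
  have Hwb := wv_bound x0 D x x1 Hq. rewrite -/w1 in Hwb.
  have Hnx : normv (wv x0 D x) < rho by lra.
  rewrite /ww -normv_sq. have := normv_nonneg (wv x0 D x). nra. }
set (c := 2 * (ep + A * dotv D D) / (dotv D D * dotv D D)) in *.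
have Hsub : subjet Om u x1 (pvec x0 D x1 (g1 - g0) ep t A) (Xmat D c A).
{ apply: (subjet_of_ineq Om u x1 _ _ dl (Xmat_sym D c A) Hdl) => x Hx Hd.
  have := Hmin x (Hnear x Hx Hd). rewrite /Phi.
  have := quad_id x0 D x x1 (g1 - g0) ep t A Hq. rewrite -/c. lra. }
have Hc0' : 0 <= c.
{ rewrite /c. apply Rlt_le, Rdiv_lt_0_compat; [|nra]. have : 0 <= A * dotv D D by apply Rmult_le_pos; lra.
  rewrite /ep; lra. }
have := Hvis x1 _ _ _ (HKO _ Kx1) Hsub (Xmat_lam_max D c A Hq Hc0').
have -> : c * dotv D D - 2 * A = 2 * ep / dotv D D by rewrite /c; field; lra.
have : 0 < 2 * ep / dotv D D by apply Rdiv_lt_0_compat; rewrite /ep; lra.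
lra.
Qed.
Definition line {N} (x0 D : vec N) (t : R) : vec N := fun i => x0 i + t * D i.

Lemma distv_line {N} (x0 D : vec N) s t : distv (line x0 D s) (line x0 D t) = Rabs (s - t) * normv D.
Proof.
rewrite /distv -normv_scal; f_equal; apply functional_extensionality => i; rewrite /subv /line; ring.
Qed.

Lemma ray_exit {N} (Om : vec N -> Prop) (M : R) (x0 D : vec N) sg :
  is_open Om -> (forall x, Om x -> normv x <= M) -> (exists j, D j <> 0) -> 0 <= sg ->
  (forall tau, 0 <= tau <= sg -> Om (line x0 D tau)) ->
  exists ts, sg < ts /\ boundary Om (line x0 D ts).
Proof.
move=> Hop HM [j Hj] Hsg Hpath.
have HnD : 0 < normv D := normv_pos D j Hj.
pose E t := 0 <= t /\ forall tau, 0 <= tau <= t -> Om (line x0 D tau).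
have Esg : E sg by split.
have HaD : 0 < Rabs (D j) by apply Rabs_pos_lt.
have Hbd : bound E.
{ exists ((M + Rabs (x0 j)) / Rabs (D j)) => t [Ht0 Ht].
  have Ho := Ht t (conj Ht0 (Rle_refl t)).
  have H1 := Rle_trans _ _ _ (coord_le_normv (line x0 D t) j) (HM _ Ho).
  rewrite /line in H1.
  have : t * Rabs (D j) <= M + Rabs (x0 j).
  { have : Rabs (t * D j) <= Rabs (x0 j + t * D j) + Rabs (x0 j).
    { have E' : t * D j = (x0 j + t * D j) + - x0 j by ring. rewrite {1}E'.
      apply: Rle_trans (Rabs_triang _ _) _. rewrite Rabs_Ropp; lra. }
    rewrite Rabs_mult (Rabs_right t); lra. }
  move=> H; apply (Rmult_le_reg_r (Rabs (D j))) => //.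
  have -> : (M + Rabs (x0 j)) / Rabs (D j) * Rabs (D j) = M + Rabs (x0 j) by field; lra.
  exact H. }
have [ts [Hub Hlub]] := completeness E Hbd (ex_intro _ sg Esg).
have Hsgts : sg <= ts by apply Hub.
have Hin : forall tau, 0 <= tau < ts -> Om (line x0 D tau).
{ move=> tau [H0 H1]; apply NNPP => Hn.
  have : ts <= tau; [|lra].
  apply Hlub => t [Ht0 Ht]; apply Rnot_lt_le => Hlt; apply Hn; apply Ht; lra. }
have Hnot : ~ Om (line x0 D ts).
{ move=> Ho; have [r [Hr Hball]] := Hop _ Ho.
  have : ts + r / (2 * normv D) <= ts; last first.
  { have : 0 < r / (2 * normv D) by apply Rdiv_lt_0_compat; lra. lra. }
  apply Hub; split.
  - have : 0 < r / (2 * normv D) by apply Rdiv_lt_0_compat; lra. lra.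
  - move=> tau [H0 H1].
    case: (Rlt_le_dec tau ts) => Htau; first by apply Hin; lra.
    apply Hball; rewrite distv_line Rabs_right; [|lra].
    have : (tau - ts) * normv D <= r / (2 * normv D) * normv D by apply Rmult_le_compat_r; lra.
    have -> : r / (2 * normv D) * normv D = r / 2 by field; lra. lra. }
have Hlt : sg < ts.
{ case: (Rle_lt_or_eq_dec _ _ Hsgts) => // E'; exfalso; apply Hnot; apply Hpath; lra. }
exists ts; split => //; split => // e He.
set dd := Rmin ts (e / (2 * normv D)).
have Hdd : 0 < dd by apply Rmin_pos; [lra|apply Rdiv_lt_0_compat; lra].
exists (line x0 D (ts - dd / 2)); split.
- apply Hin; have := Rmin_l ts (e / (2 * normv D)); rewrite -/dd; lra.
- rewrite distv_line Rabs_left; [|lra].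
  have := Rmin_r ts (e / (2 * normv D)); rewrite -/dd => H.
  have : dd * normv D <= e / (2 * normv D) * normv D by apply Rmult_le_compat_r; lra.
  have -> : e / (2 * normv D) * normv D = e / 2 by field; lra. lra.
Qed.

Lemma normv_sub_le {N} (y x : vec N) : normv (subv y x) <= normv y + normv x.
Proof.
have -> : subv y x = (fun i => y i + (-1) * x i).
{ apply functional_extensionality => i; rewrite /subv; ring. }
apply: Rle_trans (normv_tri _ _) _. rewrite normv_scal Rabs_Ropp Rabs_R1; lra.
Qed.

Lemma lin_lower {N} (Om : vec N -> Prop) (u : vec N -> R) M x0 :
  (1 <= N)%nat -> is_open Om -> strictly_convex Om -> (forall x, Om x -> normv x <= M) -> Om x0 ->
  (forall x, Om x -> 0 < u x) -> (forall x, boundary Om x -> u x = 0) ->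
  (forall x0 z t, closure Om x0 -> closure Om z -> x0 <> z -> 0 < t < 1 ->
     (1 - t) * u x0 + t * u z <= u (segpt x0 z t)) ->
  exists C, 0 < C /\ forall x d, Om x -> is_dist_bd Om x d -> C * d <= u x.
Proof.
move=> HN Hop Hsc HM Hx0 Hpos Hbd Hconc.
have Hm := Hpos x0 Hx0.
have HM0 : 0 <= M by have := HM x0 Hx0; have := normv_nonneg x0; lra.
exists (u x0 / (2 * M + 1)); split; first by apply Rdiv_lt_0_compat; lra.
move=> x d Hx [Hd _].
have [D [sg [[j Hj] [Hsg [Hpath Ex]]]]] : exists D sg, (exists j, D j <> 0) /\ 0 <= sg /\
   (forall tau, 0 <= tau <= sg -> Om (line x0 D tau)) /\ x = line x0 D sg.
{ case: (classic (x = x0)) => [Exx|Nxx].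
  - pose j0 : 'I_N := Ordinal HN.
    exists (fun i => if i == j0 then 1 else 0), 0; split; [exists j0; rewrite eqxx; lra|].
    have E0 : forall D, line x0 D 0 = x0.
    { move=> D0; apply functional_extensionality => i; rewrite /line; ring. }
    split; [lra|split].
    + move=> tau Ht; have -> : tau = 0 by lra. rewrite E0 //.
    + rewrite E0 //.
  - exists (subv x x0), 1.
    have Hne : exists j, subv x x0 j <> 0.
    { apply NNPP => H; apply Nxx; apply functional_extensionality => i.
      have : subv x x0 i = 0 by apply NNPP => Hi; apply H; exists i. rewrite /subv; lra. }
    split => //; split; [lra|split].
    + move=> tau Ht.
      have Es : line x0 (subv x x0) tau = segpt x0 x tau.
      { apply functional_extensionality => i; rewrite /line /segpt /subv; ring. }
      rewrite Es.
      case: (Rle_lt_or_eq_dec 0 tau (proj1 Ht)) => H0.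
      * case: (Rle_lt_or_eq_dec tau 1 (proj2 Ht)) => H1.
        -- apply Hsc; try apply in_closure => //; [|lra]. by move=> E; apply Nxx.
        -- rewrite -Es H1; have -> : line x0 (subv x x0) 1 = x.
           { apply functional_extensionality => i; rewrite /line /subv; ring. } done.
      * rewrite -Es -H0; have -> : line x0 (subv x x0) 0 = x0.
        { apply functional_extensionality => i; rewrite /line; ring. } done.
    + apply functional_extensionality => i; rewrite /line /subv; ring. }
have HnD : 0 < normv D := normv_pos D j Hj.
have [ts [Hts [Cz Nz]]] := ray_exit Om M x0 D sg Hop HM (ex_intro _ j Hj) Hsg Hpath.
set z := line x0 D ts in Cz Nz.
have Hts0 : 0 < ts by lra.
have Hux : (1 - sg / ts) * u x0 <= u x.
{ case: (Rle_lt_or_eq_dec 0 sg Hsg) => Hs0.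
  - have := Hconc x0 z (sg / ts) (in_closure Om x0 Hx0) Cz
      (fun E => Nz ltac:(rewrite -E; exact Hx0)) ltac:(split; [apply Rdiv_lt_0_compat; lra|]; apply (Rmult_lt_reg_r ts); [lra|]; rewrite /Rdiv Rmult_assoc Rinv_l; lra).
    rewrite (Hbd z (conj Cz Nz)).
    have -> : segpt x0 z (sg / ts) = x.
    { rewrite Ex; apply functional_extensionality => i; rewrite /segpt /z /line; field; lra. }
    lra.
  - have -> : x = x0.
    { rewrite Ex -Hs0; apply functional_extensionality => i; rewrite /line; ring. }
    rewrite -Hs0 /Rdiv Rmult_0_l Rminus_0_r Rmult_1_l; lra. }
have Hdz : d <= (ts - sg) * normv D.
{ have := Hd z (conj Cz Nz). rewrite Ex /z distv_line Rabs_left; [|lra].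
  have -> : - (sg - ts) = ts - sg by ring. done. }
have HQ : ts * normv D <= 2 * M + 1.
{ have [y [Hy Hyz]] := Cz 1 Rlt_0_1.
  have := distv_tri z y x0. rewrite (distv_sym z y).
  have -> : distv z x0 = ts * normv D.
  { have -> : x0 = line x0 D 0 by apply functional_extensionality => i; rewrite /line; ring.
    rewrite /z distv_line Rminus_0_r Rabs_right; lra. }
  have := normv_sub_le y x0. rewrite -/(distv y x0).
  have := HM y Hy. have := HM x0 Hx0. lra. }
have HQ0 : 0 < ts * normv D by apply Rmult_lt_0_compat.
have E1 : 1 - sg / ts = (ts - sg) * normv D / (ts * normv D) by field; lra.
rewrite E1 in Hux.
have HP : 0 <= (ts - sg) * normv D by apply Rmult_le_pos; lra.
have : (ts - sg) * normv D / (2 * M + 1) <= (ts - sg) * normv D / (ts * normv D).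
{ apply Rmult_le_compat_l => //. apply Rinv_le_contravar => //. }
have : d / (2 * M + 1) <= (ts - sg) * normv D / (2 * M + 1).
{ apply Rmult_le_compat_r; [apply Rlt_le, Rinv_0_lt_compat; lra|lra]. }
move=> H1 H2.
have -> : u x0 / (2 * M + 1) * d = u x0 * (d / (2 * M + 1)) by field; lra.
have : u x0 * (d / (2 * M + 1)) <= u x0 * ((ts - sg) * normv D / (ts * normv D)).
{ apply Rmult_le_compat_l; lra. }
lra.
Qed.
Lemma mulmv_neg {N} (X : mat N) v i : mulmv (fun i j => - X i j) v i = - mulmv X v i.
Proof.
rewrite /mulmv. have := sumv_scal (-1) (fun j => X i j * v j).
have -> : sumv (fun j => -1 * (X i j * v j)) = sumv (fun j => - X i j * v j) by apply sumv_ext => j; ring.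
move=> ->; ring.
Qed.

Lemma dotv_neg_l {N} (p h : vec N) : dotv (fun i => - p i) h = - dotv p h.
Proof.
rewrite /dotv. have := sumv_scal (-1) (fun i => p i * h i).
have -> : sumv (fun i => -1 * (p i * h i)) = sumv (fun i => - p i * h i) by apply sumv_ext => j; ring.
move=> ->; ring.
Qed.

Lemma vis_neg {N} (Om : vec N -> Prop) mu phi :
  0 < mu -> (forall x, Om x -> phi x < 0) -> visc_sol_lam1 Om mu phi ->
  forall x1 p X l, Om x1 -> subjet Om (fun x => - phi x) x1 p X -> is_lam_max X l -> l <= 0.
Proof.
move=> Hmu Hneg [_ [Hsup _]] x1 p X l Hx1 [Hs Hj] [[v [Hv Hev]] Hmax].
have Hsj : superjet Om phi x1 (fun i => - p i) (fun i j => - X i j).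
{ split; first by move=> i j; rewrite Hs.
  move=> e He; have [dl [Hdl H]] := Hj e He; exists dl; split => // x Hx Hd.
  have := H x Hx Hd; rewrite /quad_expansion dotv_neg_l.
  have -> : dotv (mulmv (fun i j => - X i j) (subv x x1)) (subv x x1) =
            - dotv (mulmv X (subv x x1)) (subv x x1).
  { have -> : mulmv (fun i j => - X i j) (subv x x1) = (fun i => - mulmv X (subv x x1) i).
    { apply functional_extensionality => i; apply mulmv_neg. }
    apply dotv_neg_l. }
  lra. }
have Hmin : is_lam_min (fun i j => - X i j) (- l).
{ split.
  - exists v; split => // i; rewrite mulmv_neg Hev; ring.
  - move=> m [w [Hw Hew]].
    have : - m <= l.
    { apply Hmax; exists w; split => // i; have := Hew i; rewrite mulmv_neg => H; lra. }
    lra. }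
have := Hsup x1 _ _ _ Hx1 Hsj Hmin.
have := Hneg x1 Hx1. move=> H1 H2. nra.
Qed.

Lemma vis_pos {N} (Om : vec N -> Prop) mu psi :
  0 < mu -> (forall x, Om x -> 0 < psi x) -> visc_sol_lamN Om mu psi ->
  forall x1 p X l, Om x1 -> subjet Om psi x1 p X -> is_lam_max X l -> l <= 0.
Proof.
move=> Hmu Hp [_ [_ Hsub]] x1 p X l Hx1 Hj Hl.
have := Hsub x1 p X l Hx1 Hj Hl. have := Hp x1 Hx1. move=> H1 H2. nra.
Qed.

Lemma cont_neg {N} (S : vec N -> Prop) phi : continuous_on S phi -> continuous_on S (fun x => - phi x).
Proof.
move=> H x Sx e He; have [dl [Hdl Hd]] := H x Sx e He; exists dl; split => // y Sy Hy.
have -> : - phi y - - phi x = - (phi y - phi x) by ring. rewrite Rabs_Ropp; apply Hd => //.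
Qed.

Theorem lemma3p3 (N : nat) (Omega : vec N -> Prop)
  (mu1 : R) (psi1 phi1 : vec N -> R) :
  (1 <= N)%nat ->
  is_domain Omega -> is_bounded Omega -> strictly_convex Omega ->
  interior_ball_condition Omega ->
  0 < mu1 ->
  continuous_on (closure Omega) psi1 ->
  (forall x, Omega x -> 0 < psi1 x) ->
  (forall x, boundary Omega x -> psi1 x = 0) ->
  visc_sol_lamN Omega mu1 psi1 ->
  continuous_on (closure Omega) phi1 ->
  (forall x, Omega x -> phi1 x < 0) ->
  (forall x, boundary Omega x -> phi1 x = 0) ->
  visc_sol_lam1 Omega mu1 phi1 ->
  is_sup_norm Omega psi1 1 -> is_sup_norm Omega phi1 1 ->
  exists C, 0 < C /\
    forall x d, Omega x -> is_dist_bd Omega x d ->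
      psi1 x >= C * d /\ phi1 x <= - C * d.
Proof.
move=> HN [Hop [_ [x0 Hx0]]] [M HM] Hsc _ Hmu Hcp Hpp Hbp Hvp Hcf Hnf Hbf Hvf _ _.
have [C1 [HC1 H1]] := lin_lower Omega psi1 M x0 HN Hop Hsc HM Hx0 Hpp Hbp
  (concave_seg Omega psi1 Hsc Hop Hcp Hpp (vis_pos Omega mu1 psi1 Hmu Hpp Hvp)).
have Hpn : forall x, Omega x -> 0 < - phi1 x by move=> x Hx; have := Hnf x Hx; lra.
have Hbn : forall x, boundary Omega x -> - phi1 x = 0 by move=> x Hx; rewrite Hbf //; lra.
have [C2 [HC2 H2]] := lin_lower Omega (fun x => - phi1 x) M x0 HN Hop Hsc HM Hx0 Hpn Hbn
  (concave_seg Omega (fun x => - phi1 x) Hsc Hop (cont_neg _ _ Hcf) Hpn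
     (vis_neg Omega mu1 phi1 Hmu Hnf Hvf)).
exists (Rmin C1 C2); split; first by apply Rmin_pos.
move=> x d Hx Hd.
have Hd0 : 0 <= d.
{ apply (proj2 Hd) => y _; rewrite /distv; apply normv_nonneg. }
have := H1 x d Hx Hd; have := H2 x d Hx Hd.
have := Rmin_l C1 C2; have := Rmin_r C1 C2.
move=> Hm2 Hm1 Ha Hb.
have : Rmin C1 C2 * d <= C1 * d by apply Rmult_le_compat_r.
have : Rmin C1 C2 * d <= C2 * d by apply Rmult_le_compat_r.
lra.
Qed.
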